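(* In the analytical model described in the context, assume $\max(T_1,T_2)>1$. For $U\in\{0,\dots,N_1-1\}$ and $\beta>0$ let $F(U,\beta)=b(U,T_1,T_2)\,\beta^{\min\{N_1-U,N_2\}}$. Define $U^*=N_1-N_2-1$ if $\mathcal A_2b_2(N_1-N_2-1,T_1,T_2)<\mathcal A_1b_1(N_1-N_2,T_1,T_2)+\mathcal A_2b_2(N_1-N_2,T_1,T_2)$, and $U^*=N_1-N_2$ otherwise. Then there exists $\bar\beta>0$ such that for all $\beta\in(0,\bar\beta)$, $U^*$ minimizes $F(\cdot,\beta)$ over $\{0,1,\dots,N_1-1\}$.
   Context: Parameters: integers $N_1>N_2\ge1$, $P_1,P_2>0$, $\alpha_1,\alpha_2>2$, $\lambda_1,\lambda_2>0$, $T_1,T_2\ge1$; $U$ ranges over $\{0,\dots,N_1-1\}$. $\mathcal A_1=2\pi\lambda_1\int_0^\infty z e^{-\pi\lambda_1z^2}\exp(-\pi\lambda_2(P_2/P_1)^{2/\alpha_2}z^{2\alpha_1/\alpha_2})dz$, $\mathcal A_2=2\pi\lambda_2\int_0^\infty z e^{-\pi\lambda_2z^2}\exp(-\pi\lambda_1(P_1/P_2)^{2/\alpha_1}z^{2\alpha_2/\alpha_1})dz$, $f_{Y_1}(y)=\frac{2\pi\lambda_1}{\mathcal A_1}y\exp(-\pi(\lambda_1y^2+\lambda_2(P_2/P_1)^{2/\alpha_2}y^{2\alpha_1/\alpha_2}))$, $f_{Y_2}(y)=\frac{2\pi\lambda_2}{\mathcal A_2}y\exp(-\pi(\lambda_1(P_1/P_2)^{2/\alpha_1}y^{2\alpha_2/\alpha_1}+\lambda_2y^2))$.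 $\bar L_j(T_j)=2\pi\lambda_j\int_0^\infty r\int_{(P_j/(P_1T_j))^{1/\alpha_j}r^{\alpha_1/\alpha_j}}^{(P_j/P_1)^{1/\alpha_j}r^{\alpha_1/\alpha_j}}f_{Y_j}(y)dy\,dr$, $\bar L=\bar L_1(T_1)+\bar L_2(T_2)$; $K_0\sim$ Poisson($\bar L$), $u_{\mathrm{IN},0}=\min(U,K_0)$; $p_c(U)=e^{-\bar L}(\sum_{k=0}^{U-1}\frac{\bar L^k}{k!}+U\sum_{k\ge U}\frac{\bar L^k}{(k+1)!})$, $p_{\bar c}=1-p_c$. $\mathcal N_n=\{(n_1,n_2,n_3)\in\mathbb N_0^3:\sum n_i=n\}$, $\mathcal M_n=\{(m_a)_{a=1}^n\in\mathbb N_0^n:\sum_a a\,m_a=n\}$. With $U_1=U$, $Q_1=\Pr(u_{\mathrm{IN},0}=U)$, $U_2=0$, $Q_2=1$, for $j=1,2$ $$b_j(U,T_1,T_2)=Q_j\!\!\sum_{(n_1,n_2,n_3)\in\mathcal N_{N_j-U_j}}\sum_{(m_a)\in\mathcal M_{n_1}}\sum_{(p_a)\in\mathcal M_{n_2}}\sum_{(q_a)\in\mathcal M_{n_3}}\Big(\int_0^\infty y^{\frac{2\alpha_j}{\alpha_1}(\sum m_a+\sum p_a)+\frac{2\alpha_j}{\alpha_2}\sum q_a}f_{Y_j}(y)dy\Big)\prod_{a=1}^{n_1}\frac1{m_a!}\Big(\tfrac{2\pi\lambda_1}{\alpha_1(a-2/\alpha_1)}(\tfrac{P_1}{P_j})^{2/\alpha_1}p_{\bar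 c}(1-T_j^{-(a-2/\alpha_1)})\Big)^{m_a}\prod_{a=1}^{n_2}\frac1{p_a!}\Big(\tfrac{2\pi\lambda_1}{\alpha_1(a-2/\alpha_1)}(\tfrac{P_1}{P_j})^{2/\alpha_1}T_j^{-(a-2/\alpha_1)}\Big)^{p_a}\prod_{a=1}^{n_3}\frac1{q_a!}\Big(\tfrac{2\pi\lambda_2}{\alpha_2(a-2/\alpha_2)}(\tfrac{P_2}{P_j})^{2/\alpha_2}\Big)^{q_a},$$ and $b(U,T_1,T_2)=\mathcal A_2b_2$ if $U<N_1-N_2$, $\mathcal A_1b_1+\mathcal A_2b_2$ if $U=N_1-N_2$, $\mathcal A_1b_1$ if $U>N_1-N_2$. (In the paper's model $b(U,T_1,T_2)\beta^{\min\{N_1-U,N_2\}}$ is the small-$\beta$ asymptotic of the outage probability of a user-centric interference-nulling scheme with maximum nulling degrees of freedom $U$.) *)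

(* Defs.v *)
From Stdlib Require Import Reals List Arith.
From Coquelicot Require Import Coquelicot.
Import ListNotations.
Open Scope R_scope.

Record params := Params {
  N1 : nat; N2 : nat;
  P1 : R; P2 : R;
  al1 : R; al2 : R;    (* path-loss exponents alpha_1, alpha_2 *)
  lam1 : R; lam2 : R;  (* densities lambda_1, lambda_2 *)
  T1 : R; T2 : R
}.

(** Real power x^y; all exponents used below are > 0, and for x = 0 we use 0^y = 0. *)
Definition rpow (x y : R) : R := if Rlt_dec 0 x then Rpower x y else 0.

Definition Iinf (f : R -> R) : R := RInt_gen f (at_point 0) (Rbar_locally p_infty).

Definition fsum (n : nat) (f : nat -> R) : R :=
  fold_right (fun k acc => f k + acc) 0 (seq 0 n).

Section Model.
Variable p : params.

Definition A1 : R :=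
  2 * PI * lam1 p * Iinf (fun z => z * exp (- PI * lam1 p * z ^ 2)
     * exp (- PI * lam2 p * rpow (P2 p / P1 p) (2 / al2 p) * rpow z (2 * al1 p / al2 p))).

Definition A2 : R :=
  2 * PI * lam2 p * Iinf (fun z => z * exp (- PI * lam2 p * z ^ 2)
     * exp (- PI * lam1 p * rpow (P1 p / P2 p) (2 / al1 p) * rpow z (2 * al2 p / al1 p))).

Definition fY1 (y : R) : R :=
  2 * PI * lam1 p / A1 * y
  * exp (- PI * (lam1 p * y ^ 2 + lam2 p * rpow (P2 p / P1 p) (2 / al2 p) * rpow y (2 * al1 p / al2 p))).

Definition fY2 (y : R) : R :=
  2 * PI * lam2 p / A2 * y
  * exp (- PI * (lam1 p * rpow (P1 p / P2 p) (2 / al1 p) * rpow y (2 * al2 p / al1 p) + lam2 p * y ^ 2)).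

Definition Lbar_gen (Pj aj lj : R) (fY : R -> R) (T : R) : R :=
  2 * PI * lj * Iinf (fun r => r *
     RInt fY (rpow (Pj / (P1 p * T)) (1 / aj) * rpow r (al1 p / aj))
             (rpow (Pj / P1 p) (1 / aj) * rpow r (al1 p / aj))).

Definition Lbar1 (T : R) : R := Lbar_gen (P1 p) (al1 p) (lam1 p) fY1 T.
Definition Lbar2 (T : R) : R := Lbar_gen (P2 p) (al2 p) (lam2 p) fY2 T.
Definition Lbar : R := Lbar1 (T1 p) + Lbar2 (T2 p).

(** Poisson(Lbar) probability mass function of K0. *)
Definition poisson_pmf (k : nat) : R := exp (- Lbar) * Lbar ^ k / INR (fact k).

(** Q1 = Pr(u_IN,0 = U) with u_IN,0 = min(U, K0). *)
Definition Q1 (U : nat) : R :=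
  Series (fun k => if Nat.eqb (Nat.min U k) U then poisson_pmf k else 0).

Definition pc (U : nat) : R :=
  exp (- Lbar) * (fsum U (fun k => Lbar ^ k / INR (fact k))
    + INR U * Series (fun k => if Nat.leb U k then Lbar ^ k / INR (fact (k + 1)) else 0)).

Definition pcbar (U : nat) : R := 1 - pc U.

(** Enumeration of N_n = {(n1,n2,n3) : n1+n2+n3 = n}, each triple once. *)
Definition Nset (n : nat) : list (nat * nat * nat) :=
  flat_map (fun n1 => map (fun n2 => (n1, n2, n - n1 - n2)%nat) (seq 0 (S (n - n1))))
           (seq 0 (S n)).

Fixpoint lists_bounded (n k : nat) : list (list nat) :=
  match n with
  | O => [[]]
  | S n' => flat_map (fun x => map (cons x) (lists_bounded n' k)) (seq 0 (S k))
  end.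

Fixpoint wsum_from (a : nat) (m : list nat) : nat :=
  match m with
  | [] => O
  | x :: t => (a * x + wsum_from (S a) t)%nat
  end.

(** M_n = {(m_1,...,m_n) : sum_a a m_a = n}, encoded as lists [m_1; ...; m_n]
    (entries are necessarily <= n). *)
Definition Mset (n : nat) : list (list nat) :=
  filter (fun m => Nat.eqb (wsum_from 1 m) n) (lists_bounded n n).

Fixpoint pprod_from (a : nat) (c : nat -> R) (m : list nat) : R :=
  match m with
  | [] => 1
  | x :: t => / INR (fact x) * (c a) ^ x * pprod_from (S a) c t
  end.

Definition sumn (m : list nat) : nat := fold_right Nat.add O m.

Definition lsum {A : Type} (l : list A) (f : A -> R) : R :=
  fold_right (fun x acc => f x + acc) 0 l.

(** b_j for tier j with power Pj, exponent aj, bias Tj, pdf fY, Nj, U_j, Q_j;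
    U is the nulling parameter entering through pcbar. *)
Definition b_gen (Pj aj Tj : R) (fY : R -> R) (Nj Uj : nat) (Qj : R) (U : nat) : R :=
  let c1 := fun a : nat => 2 * PI * lam1 p / (al1 p * (INR a - 2 / al1 p))
              * rpow (P1 p / Pj) (2 / al1 p) * pcbar U
              * (1 - rpow Tj (- (INR a - 2 / al1 p))) in
  let c2 := fun a : nat => 2 * PI * lam1 p / (al1 p * (INR a - 2 / al1 p))
              * rpow (P1 p / Pj) (2 / al1 p) * rpow Tj (- (INR a - 2 / al1 p)) in
  let c3 := fun a : nat => 2 * PI * lam2 p / (al2 p * (INR a - 2 / al2 p))
              * rpow (P2 p / Pj) (2 / al2 p) in
  Qj * lsum (Nset (Nj - Uj)) (fun t =>
    let '(n1, n2, n3) := t in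
    lsum (Mset n1) (fun m => lsum (Mset n2) (fun pp => lsum (Mset n3) (fun q =>
      Iinf (fun y => rpow y (2 * aj / al1 p * INR (sumn m + sumn pp)
                             + 2 * aj / al2 p * INR (sumn q)) * fY y)
      * pprod_from 1 c1 m * pprod_from 1 c2 pp * pprod_from 1 c3 q)))).

Definition b1 (U : nat) : R := b_gen (P1 p) (al1 p) (T1 p) fY1 (N1 p) U (Q1 U) U.
Definition b2 (U : nat) : R := b_gen (P2 p) (al2 p) (T2 p) fY2 (N2 p) 0 1 U.

Definition b (U : nat) : R :=
  if Nat.ltb U (N1 p - N2 p) then A2 * b2 U
  else if Nat.eqb U (N1 p - N2 p) then A1 * b1 U + A2 * b2 U
  else A1 * b1 U.

Definition F (U : nat) (beta : R) : R := b U * beta ^ (Nat.min (N1 p - U) (N2 p)).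

Definition Ustar : nat :=
  if Rlt_dec (A2 * b2 (N1 p - N2 p - 1)) (A1 * b1 (N1 p - N2 p) + A2 * b2 (N1 p - N2 p))
  then (N1 p - N2 p - 1)%nat else (N1 p - N2 p)%nat.

End Model.

(* Main.v *)
Require Import Defs.
From Stdlib Require Import Reals.
From Stdlib Require Import Lra Lia Psatz List Arith Classical FunctionalExtensionality.
From Coquelicot Require Import Coquelicot.
Import Defs.
Import ListNotations.
Open Scope R_scope.

Lemma rpow_nonneg x y : 0 <= rpow x y.
Proof. unfold rpow; destruct (Rlt_dec 0 x); [left; apply exp_pos | lra]. Qed.

Lemma rpow_pos x y : 0 < x -> 0 < rpow x y.
Proof. intros H; unfold rpow; destruct (Rlt_dec 0 x); [apply exp_pos | lra]. Qed.

Lemma rpow_eq x y : 0 < x -> rpow x y = Rpower x y.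
Proof. intros H; unfold rpow; destruct (Rlt_dec 0 x); [reflexivity | lra]. Qed.

Lemma rpow_le0 x y : x <= 0 -> rpow x y = 0.
Proof. intros H; unfold rpow; destruct (Rlt_dec 0 x); [lra | reflexivity]. Qed.

Lemma exp_le_mono a b : a <= b -> exp a <= exp b.
Proof. intros [H|H]; [left; apply exp_increasing; auto | subst; lra]. Qed.

Lemma ln_lt_self r : 0 < r -> ln r < r.
Proof.
  intros H. assert (H1 : r < exp r) by (pose proof (exp_ineq1 r) as E; lra).
  rewrite <- (ln_exp r) at 2. apply ln_increasing; auto.
Qed.

Lemma rpow_le_exp t r : 0 <= t -> 0 <= r -> rpow r t <= exp (t * r).
Proof.
  intros Ht Hr. destruct (Rlt_dec 0 r) as [H|H].
  - rewrite rpow_eq by lra. unfold Rpower. apply exp_le_mono.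
    pose proof (ln_lt_self r H). nra.
  - rewrite rpow_le0 by lra. left; apply exp_pos.
Qed.

Lemma pow_gauss t c r : 0 <= t -> 0 < c -> 0 <= r ->
  rpow r t * exp (- c * r ^ 2) <= exp (t ^ 2 / (2 * c)) * exp (- (c / 2) * r ^ 2).
Proof.
  intros Ht Hc Hr.
  eapply Rle_trans.
  { apply Rmult_le_compat_r; [left; apply exp_pos| apply rpow_le_exp; auto]. }
  rewrite <- !exp_plus. apply exp_le_mono.
  assert (H : t * r + - c * r ^ 2 - (t ^ 2 / (2 * c) + - (c / 2) * r ^ 2)
              = - (c * r - t) ^ 2 / (2 * c)) by (field; lra).
  assert (0 <= (c * r - t) ^ 2 / (2 * c)).
  { apply Rdiv_le_0_compat; [apply pow2_ge_0 | lra]. }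
  lra.
Qed.

Lemma rpow_le_base x y e : 0 <= e -> 0 <= x <= y -> rpow x e <= rpow y e.
Proof.
  intros He [Hx Hxy]. destruct (Rlt_dec 0 x) as [H|H].
  - rewrite !rpow_eq by lra. apply Rle_Rpower_l; lra.
  - rewrite (rpow_le0 x) by lra. apply rpow_nonneg.
Qed.

Lemma rpow_lt_base x y e : 0 < e -> 0 < x < y -> rpow x e < rpow y e.
Proof.
  intros He [Hx Hxy]. rewrite !rpow_eq by lra. apply Rlt_Rpower_l; lra.
Qed.

Lemma rpow_mult x y e : 0 <= x -> 0 <= y -> rpow (x * y) e = rpow x e * rpow y e.
Proof.
  intros Hx Hy. destruct (Rlt_dec 0 x) as [H1|H1]; [destruct (Rlt_dec 0 y) as [H2|H2]|].
  - rewrite !rpow_eq by nra. rewrite Rpower_mult_distr; auto.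
  - replace y with 0 by lra. rewrite Rmult_0_r, !(rpow_le0 0) by lra; ring.
  - replace x with 0 by lra. rewrite Rmult_0_l, !(rpow_le0 0) by lra; ring.
Qed.

Lemma rpow_rpow x e f : 0 <= x -> rpow (rpow x e) f = rpow x (e * f).
Proof.
  intros Hx. destruct (Rlt_dec 0 x) as [H|H].
  - rewrite (rpow_eq x) by auto. rewrite rpow_eq by (unfold Rpower; apply exp_pos).
    rewrite rpow_eq by auto. rewrite Rpower_mult. reflexivity.
  - rewrite !(rpow_le0 x) by lra. apply rpow_le0; lra.
Qed.

Lemma rpow_1 x : 0 <= x -> rpow x 1 = x.
Proof.
  intros Hx. destruct (Rlt_dec 0 x).
  - rewrite rpow_eq by auto; apply Rpower_1; auto.
  - rewrite rpow_le0; lra.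
Qed.

Lemma rpow_2 x : 0 <= x -> rpow x 2 = x ^ 2.
Proof.
  intros Hx. destruct (Rlt_dec 0 x).
  - rewrite rpow_eq by auto. replace 2 with (INR 2) by (simpl; lra). apply Rpower_pow; auto.
  - rewrite rpow_le0 by lra. replace x with 0 by lra. ring.
Qed.

Lemma rpow_le1 T e : 1 <= T -> e <= 0 -> rpow T e <= 1.
Proof.
  intros HT He. rewrite rpow_eq by lra. unfold Rpower.
  rewrite <- exp_0. apply exp_le_mono. pose proof (ln_le 1 T ltac:(lra) HT).
  rewrite ln_1 in H. nra.
Qed.

Lemma continuous_rpow e x : 0 < e -> continuous (fun y => rpow y e) x.
Proof.
  intros He. destruct (Rlt_dec 0 x) as [H|H]; [|destruct (Rlt_dec x 0) as [H'|H']].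
  - apply continuous_ext_loc with (g := fun y => Rpower y e).
    + apply locally_interval with (a := Rbar.Finite 0) (b := p_infty); simpl; auto.
      intros y Hy _. rewrite rpow_eq; auto.
    + apply (ex_derive_continuous (K:=R_AbsRing) (V:=R_NormedModule) (fun y => Rpower y e) x). exists (e * Rpower x (e - 1)).
      apply is_derive_Reals. apply derivable_pt_lim_power; auto.
  - apply continuous_ext_loc with (g := fun y => 0).
    + apply locally_interval with (a := m_infty) (b := Rbar.Finite 0); simpl; auto.
      intros y _ Hy. rewrite rpow_le0; lra.
    + apply continuous_const.
  - assert (x = 0) by lra. subst x.
    intros P [eps Heps]. simpl. rewrite rpow_le0 in Heps by lra.
    set (d := rpow eps (/ e)).
    assert (Hd : 0 < d) by (apply rpow_pos, cond_pos).
    exists (mkposreal d Hd). intros y Hy. apply Heps.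
    change (Rabs (rpow y e - 0) < eps).
    assert (Hy' : Rabs (y - 0) < d) by exact Hy. rewrite Rminus_0_r in Hy'.
    destruct (Rlt_dec 0 y) as [Hp|Hp].
    + rewrite Rminus_0_r, Rabs_pos_eq by apply rpow_nonneg.
      rewrite Rabs_pos_eq in Hy' by lra.
      apply Rlt_le_trans with (rpow d e).
      * apply rpow_lt_base; lra.
      * unfold d. rewrite rpow_rpow by (left; apply cond_pos).
        replace (/ e * e) with 1 by (field; lra). rewrite rpow_1 by (left; apply cond_pos). lra.
    + rewrite rpow_le0 by lra. rewrite Rminus_0_r, Rabs_R0. apply cond_pos.
Qed.


Lemma RInt_gauss K c x : 0 < c ->
  RInt (fun y => K * y * exp (- c * y ^ 2)) 0 x = K / (2 * c) * (1 - exp (- c * x ^ 2)).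
Proof.
  intros Hc.
  assert (H : is_RInt (fun y => K * y * exp (- c * y ^ 2)) 0 x
     (minus ((fun y => - K / (2 * c) * exp (- c * y ^ 2)) x) ((fun y => - K / (2 * c) * exp (- c * y ^ 2)) 0))).
  { apply (is_RInt_derive (fun y => - K / (2 * c) * exp (- c * y ^ 2)) (fun y => K * y * exp (- c * y ^ 2))).
    - intros z _. auto_derive; auto. simpl. field. lra.
    - intros z _. apply (ex_derive_continuous (K:=R_AbsRing) (V:=R_NormedModule)).
      auto_derive; auto. }
  rewrite (is_RInt_unique _ _ _ _ H). unfold minus, plus, opp; simpl.
  idtac.
  replace (- c * (0 * (0 * 1))) with 0 by ring. rewrite exp_0. field; lra.
Qed.

Lemma Iinf_ex (g : R -> R) (K c : R) :
  0 <= K -> 0 < c ->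
  (forall x, 0 <= x -> continuous g x) ->
  (forall x, 0 <= x -> 0 <= g x <= K * x * exp (- c * x ^ 2)) ->
  (forall x, 0 <= x -> RInt g 0 x <= Iinf g) /\ 0 <= Iinf g
  /\ ex_RInt_gen g (at_point 0) (Rbar_locally p_infty).
Proof.
  intros HK Hc Hcont Hb.
  assert (exRI : forall a b, 0 <= a -> 0 <= b -> ex_RInt g a b).
  { intros a b Ha Hb0. apply (ex_RInt_continuous (V:=R_CompleteNormedModule)). intros z Hz. apply Hcont.
    destruct Hz as [Hz _]. eapply Rle_trans; [|exact Hz].
    apply Rmin_glb; auto. }
  set (h := fun y => K * y * exp (- c * y ^ 2)).
  assert (exh : forall x, ex_RInt h 0 x).
  { intros x. apply (ex_RInt_continuous (V:=R_CompleteNormedModule)). intros z _.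
    apply (ex_derive_continuous (K:=R_AbsRing) (V:=R_NormedModule)). unfold h; auto_derive; auto. }
  assert (Hbd : forall x, 0 <= x -> RInt g 0 x <= K / (2 * c)).
  { intros x Hx. eapply Rle_trans. apply RInt_le; auto. apply exRI; lra.
    intros z Hz. apply (Hb z ltac:(lra)).
    fold h. unfold h. rewrite RInt_gauss by auto.
    assert (0 < exp (- c * x ^ 2)) by apply exp_pos.
    assert (0 <= K / (2 * c)) by (apply Rdiv_le_0_compat; lra). nra. }
  assert (Hmono : forall a b, 0 <= a <= b -> RInt g 0 a <= RInt g 0 b).
  { intros a b [Ha Hab]. rewrite <- (RInt_Chasles g 0 a b) by (apply exRI; lra).
    assert (0 <= RInt g a b).
    { apply RInt_ge_0; auto. apply exRI; lra. intros z Hz; apply Hb; lra. }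
    unfold plus; simpl. lra. }
  set (E := fun v => exists x, 0 <= x /\ v = RInt g 0 x).
  assert (HE1 : bound E) by (exists (K / (2 * c)); intros v [x [Hx ->]]; auto).
  assert (HE2 : exists v, E v) by (exists (RInt g 0 0); exists 0; split; [lra|auto]).
  destruct (completeness E HE1 HE2) as [l [Hub Hlub]].
  assert (Hle : forall x, 0 <= x -> RInt g 0 x <= l) by (intros x Hx; apply Hub; exists x; auto).
  assert (Hgen : is_RInt_gen g (at_point 0) (Rbar_locally p_infty) l).
  { unfold is_RInt_gen, filterlimi, filter_le, filtermapi.
    intros P [eps HP].
    destruct (classic (exists x0, 0 <= x0 /\ l - eps < RInt g 0 x0)) as [[x0 [Hx0 Hlt]]|Hn].
    - apply Filter_prod with (Q := fun a => a = 0) (R := fun b => x0 < b).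
      + reflexivity.
      + exists x0; auto.
      + intros a b' -> Hb'. exists (RInt g 0 b'). split.
        * simpl. apply (RInt_correct (V:=R_CompleteNormedModule)), exRI; lra.
        * apply HP. change (Rabs (RInt g 0 b' - l) < eps).
          pose proof (Hle b' ltac:(lra)). pose proof (Hmono x0 b' ltac:(lra)).
          pose proof (cond_pos eps).
          rewrite Rabs_left1 by lra. lra.
    - exfalso. assert (l <= l - eps).
      { apply Hlub. intros v [x [Hx ->]]. apply Rnot_lt_le. intros Hc'. apply Hn. exists x; auto. }
      pose proof (cond_pos eps). lra. }
  assert (HI : Iinf g = l).
  { unfold Iinf. apply (is_RInt_gen_unique (V:=R_CompleteNormedModule)); auto. }
  rewrite HI. split; auto. split; [|exists l; auto].
  eapply Rle_trans; [|apply (Hle 0); lra]. rewrite RInt_point. apply Rle_refl.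
Qed.

Lemma Iinf_pos (g : R -> R) (K c : R) :
  0 <= K -> 0 < c ->
  (forall x, 0 <= x -> continuous g x) ->
  (forall x, 0 <= x -> 0 <= g x <= K * x * exp (- c * x ^ 2)) ->
  (forall x, 0 < x -> 0 < g x) -> 0 < Iinf g.
Proof.
  intros HK Hc Hcont Hb Hpos.
  destruct (Iinf_ex g K c HK Hc Hcont Hb) as [H1 _].
  eapply Rlt_le_trans; [|apply (H1 1); lra].
  apply RInt_gt_0; [lra| |]. intros; apply Hpos; lra. intros; apply Hcont; lra.
Qed.

Lemma Iinf_transfer (g g' : R -> R) :
  (forall x, 0 < x -> g x = g' x) ->
  ex_RInt_gen g' (at_point 0) (Rbar_locally p_infty) -> Iinf g = Iinf g'.
Proof.
  intros Heq [l Hl]. unfold Iinf.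
  rewrite (is_RInt_gen_unique (V:=R_CompleteNormedModule) g' l Hl).
  apply (is_RInt_gen_unique (V:=R_CompleteNormedModule)).
  apply (is_RInt_gen_ext (V:=R_NormedModule) g' g); auto.
  apply Filter_prod with (Q := fun a => a = 0) (R := fun b => 0 < b).
  reflexivity. exists 0; auto.
  intros a b -> Hb x Hx. simpl in Hx. rewrite Rmin_left in Hx by lra. symmetry; apply Heq; lra.
Qed.

Lemma Iinf_pos' (g g' : R -> R) (K c : R) :
  0 <= K -> 0 < c ->
  (forall x, 0 < x -> g x = g' x) ->
  (forall x, 0 <= x -> continuous g' x) ->
  (forall x, 0 <= x -> 0 <= g' x <= K * x * exp (- c * x ^ 2)) ->
  (forall x, 0 < x -> 0 < g' x) -> 0 < Iinf g.
Proof.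
  intros HK Hc Heq Hcont Hb Hpos.
  destruct (Iinf_ex g' K c HK Hc Hcont Hb) as [_ [_ Hex]].
  rewrite (Iinf_transfer g g'); auto. apply (Iinf_pos g' K c); auto.
Qed.


Lemma cont_mult (f g : R -> R) x : continuous f x -> continuous g x -> continuous (fun y => f y * g y) x.
Proof. intros; apply (continuous_mult (K:=R_AbsRing) f g); auto. Qed.
Lemma cont_plus (f g : R -> R) x : continuous f x -> continuous g x -> continuous (fun y => f y + g y) x.
Proof. intros; apply (continuous_plus (V:=R_NormedModule) f g); auto. Qed.
Lemma cont_opp (f : R -> R) x : continuous f x -> continuous (fun y => - f y) x.
Proof. intros; apply (continuous_opp (V:=R_NormedModule) f); auto. Qed.
Lemma cont_const (c : R) x : continuous (fun _ : R => c) x.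
Proof. apply continuous_const. Qed.
Lemma cont_id x : continuous (fun y : R => y) x.
Proof. apply continuous_id. Qed.
Lemma cont_exp (f : R -> R) x : continuous f x -> continuous (fun y => exp (f y)) x.
Proof. intros; apply continuous_exp_comp; auto. Qed.
Lemma cont_pow (f : R -> R) n x : continuous f x -> continuous (fun y => f y ^ n) x.
Proof.
  intros H. induction n; simpl.
  - apply cont_const.
  - apply cont_mult; auto.
Qed.
Lemma cont_rpow (f : R -> R) e x : 0 < e -> continuous f x -> continuous (fun y => rpow (f y) e) x.
Proof. intros He H. apply (continuous_comp f (fun y => rpow y e)); auto. apply continuous_rpow; auto. Qed.
Lemma cont_div (f : R -> R) c x : continuous f x -> continuous (fun y => f y / c) x.
Proof. intros H. unfold Rdiv. apply cont_mult; auto. apply cont_const. Qed.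

Ltac cont1 :=
  lazymatch goal with
  | |- continuous (fun y => _ * _) _ => apply cont_mult
  | |- continuous (fun y => _ + _) _ => apply cont_plus
  | |- continuous (fun y => - _) _ => apply cont_opp
  | |- continuous (fun y => exp _) _ => apply cont_exp
  | |- continuous (fun y => _ ^ _) _ => apply cont_pow
  | |- continuous (fun y => _ / _) _ => apply cont_div
  | |- continuous (fun y => y) _ => apply cont_id
  | |- continuous (Rmult ?c) _ => apply (cont_mult (fun _ => c) (fun y => y))
  | |- continuous (fun y => ?c) _ => apply cont_const
  end.
Ltac cont := repeat cont1.

Definition Hyp (p : params) : Prop :=
  0 < P1 p /\ 0 < P2 p /\ 2 < al1 p /\ 2 < al2 p /\ 0 < lam1 p /\ 0 < lam2 p
  /\ 1 <= T1 p /\ 1 <= T2 p.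

Lemma exp_le1 x : x <= 0 -> exp x <= 1.
Proof. intros H. rewrite <- exp_0. apply exp_le_mono; auto. Qed.

Lemma Iinf_shape_pos (a bb d : R) :
  0 < a -> 0 <= bb -> 0 < d ->
  0 < Iinf (fun z => z * exp (- a * z ^ 2) * exp (- bb * rpow z d)).
Proof.
  intros Ha Hb Hd. apply (Iinf_pos _ 1 a); try lra.
  - intros x _. cont. apply cont_rpow; auto. cont.
  - intros x Hx. split.
    + apply Rmult_le_pos; [apply Rmult_le_pos; auto; left; apply exp_pos|left; apply exp_pos].
    + rewrite Rmult_1_l. rewrite <- (Rmult_1_r (x * exp (- a * x ^ 2))) at 2.
      apply Rmult_le_compat_l. apply Rmult_le_pos; auto; left; apply exp_pos.
      apply exp_le1. pose proof (rpow_nonneg x d). nra.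
  - intros x Hx. apply Rmult_lt_0_compat; [apply Rmult_lt_0_compat; auto|]; apply exp_pos.
Qed.

Lemma A1_pos p : Hyp p -> 0 < A1 p.
Proof.
  intros (HP1 & HP2 & Ha1 & Ha2 & Hl1 & Hl2 & HT1 & HT2). unfold A1.
  apply Rmult_lt_0_compat. pose proof PI_RGT_0; nra.
  assert (E : (fun z => z * exp (- PI * lam1 p * z ^ 2) *
      exp (- PI * lam2 p * rpow (P2 p / P1 p) (2 / al2 p) * rpow z (2 * al1 p / al2 p)))
   = (fun z => z * exp (- (PI * lam1 p) * z ^ 2) *
      exp (- (PI * lam2 p * rpow (P2 p / P1 p) (2 / al2 p)) * rpow z (2 * al1 p / al2 p)))).
  { apply functional_extensionality; intros z. repeat f_equal; ring. }
  rewrite E. apply Iinf_shape_pos.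
  - pose proof PI_RGT_0; nra.
  - pose proof PI_RGT_0; pose proof (rpow_nonneg (P2 p / P1 p) (2 / al2 p)).
    apply Rmult_le_pos; [nra|auto].
  - apply Rdiv_lt_0_compat; lra.
Qed.

Lemma A2_pos p : Hyp p -> 0 < A2 p.
Proof.
  intros (HP1 & HP2 & Ha1 & Ha2 & Hl1 & Hl2 & HT1 & HT2). unfold A2.
  apply Rmult_lt_0_compat. pose proof PI_RGT_0; nra.
  assert (E : (fun z => z * exp (- PI * lam2 p * z ^ 2) *
      exp (- PI * lam1 p * rpow (P1 p / P2 p) (2 / al1 p) * rpow z (2 * al2 p / al1 p)))
   = (fun z => z * exp (- (PI * lam2 p) * z ^ 2) *
      exp (- (PI * lam1 p * rpow (P1 p / P2 p) (2 / al1 p)) * rpow z (2 * al2 p / al1 p)))).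
  { apply functional_extensionality; intros z. repeat f_equal; ring. }
  rewrite E. apply Iinf_shape_pos.
  - pose proof PI_RGT_0; nra.
  - pose proof PI_RGT_0; pose proof (rpow_nonneg (P1 p / P2 p) (2 / al1 p)).
    apply Rmult_le_pos; [nra|auto].
  - apply Rdiv_lt_0_compat; lra.
Qed.

Lemma fY_bound (D a s : R) (Z : R -> R) y :
  0 < D -> 0 < a -> 0 <= s -> 0 <= y -> a * y ^ 2 <= Z y ->
  0 <= rpow y s * (D * y * exp (- PI * Z y)) <=
  D * exp (s ^ 2 / (2 * (PI * a))) * y * exp (- (PI * a / 2) * y ^ 2).
Proof.
  intros HD Ha Hs Hy HZ. pose proof PI_RGT_0 as HPI.
  pose proof (rpow_nonneg y s). pose proof (exp_pos (- PI * Z y)).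
  split. { apply Rmult_le_pos; auto. apply Rmult_le_pos; [apply Rmult_le_pos|]; lra. }
  assert (H1 : exp (- PI * Z y) <= exp (- (PI * a) * y ^ 2)).
  { apply exp_le_mono. assert (0 <= PI * (Z y - a * y ^ 2)) by (apply Rmult_le_pos; lra). lra. }
  assert (HPa : 0 < PI * a) by (apply Rmult_lt_0_compat; lra).
  pose proof (pow_gauss s (PI * a) y Hs HPa Hy) as HG.
  assert (H2 : rpow y s * exp (- PI * Z y) <= rpow y s * exp (- (PI * a) * y ^ 2))
    by (apply Rmult_le_compat_l; auto).
  replace (rpow y s * (D * y * exp (- PI * Z y))) with (D * y * (rpow y s * exp (- PI * Z y))) by ring.
  replace (D * exp (s ^ 2 / (2 * (PI * a))) * y * exp (- (PI * a / 2) * y ^ 2))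
    with (D * y * (exp (s ^ 2 / (2 * (PI * a))) * exp (- (PI * a / 2) * y ^ 2))) by ring.
  apply Rmult_le_compat_l; [apply Rmult_le_pos; lra|]. eapply Rle_trans; [exact H2|exact HG].
Qed.

Lemma Iinf_fY_pos (D a s : R) (Z : R -> R) :
  0 < D -> 0 < a -> 0 <= s ->
  (forall y, continuous Z y) -> (forall y, 0 <= y -> a * y ^ 2 <= Z y) ->
  0 < Iinf (fun y => rpow y s * (D * y * exp (- PI * Z y))).
Proof.
  intros HD Ha Hs HZc HZ. pose proof PI_RGT_0 as HPI.
  assert (HK : 0 <= D * exp (s ^ 2 / (2 * (PI * a)))) by (apply Rmult_le_pos; [lra|left; apply exp_pos]).
  assert (Hc : 0 < PI * a / 2) by (apply Rdiv_lt_0_compat; [apply Rmult_lt_0_compat|]; lra).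
  destruct (Req_dec s 0) as [Hs0|Hs0].
  - apply (Iinf_pos' _ (fun y => D * y * exp (- PI * Z y)) _ (PI * a / 2) HK Hc).
    + intros x Hx. subst s. rewrite rpow_eq, Rpower_O by lra. ring.
    + intros x _. cont. auto.
    + intros x Hx. destruct (Rle_lt_or_eq_dec _ _ Hx) as [Hx'|Hx0].
      * pose proof (fY_bound D a s Z x HD Ha Hs Hx (HZ x Hx)) as B.
        subst s. rewrite rpow_eq, Rpower_O, Rmult_1_l in B by lra. exact B.
      * subst x. rewrite !Rmult_0_r, Rmult_0_l. lra.
    + intros x Hx. pose proof (exp_pos (- PI * Z x)). apply Rmult_lt_0_compat; auto. apply Rmult_lt_0_compat; auto.
  - apply (Iinf_pos' _ (fun y => rpow y s * (D * y * exp (- PI * Z y))) _ (PI * a / 2) HK Hc).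
    + auto.
    + intros x _. apply cont_mult. apply continuous_rpow; lra. cont. auto.
    + intros x Hx. apply fY_bound; auto.
    + intros x Hx. pose proof (exp_pos (- PI * Z x)). pose proof (rpow_pos x s Hx).
      apply Rmult_lt_0_compat; auto. apply Rmult_lt_0_compat; auto. apply Rmult_lt_0_compat; auto.
Qed.


Lemma fY1_int_pos p s : Hyp p -> 0 <= s -> 0 < Iinf (fun y => rpow y s * fY1 p y).
Proof.
  intros H Hs. pose proof (A1_pos p H) as HA.
  destruct H as (HP1 & HP2 & Ha1 & Ha2 & Hl1 & Hl2 & HT1 & HT2). pose proof PI_RGT_0.
  unfold fY1.
  apply (Iinf_fY_pos (2 * PI * lam1 p / A1 p) (lam1 p) s
     (fun y => lam1 p * y ^ 2 + lam2 p * rpow (P2 p / P1 p) (2 / al2 p) * rpow y (2 * al1 p / al2 p))); auto.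
  - apply Rdiv_lt_0_compat; auto. apply Rmult_lt_0_compat; lra.
  - intros y. cont. apply cont_rpow; [apply Rdiv_lt_0_compat; lra|cont].
  - intros y _. pose proof (rpow_nonneg (P2 p / P1 p) (2 / al2 p)). pose proof (rpow_nonneg y (2 * al1 p / al2 p)).
    assert (0 <= lam2 p * rpow (P2 p / P1 p) (2 / al2 p) * rpow y (2 * al1 p / al2 p)).
    { apply Rmult_le_pos; auto. apply Rmult_le_pos; lra. } lra.
Qed.

Lemma fY2_int_pos p s : Hyp p -> 0 <= s -> 0 < Iinf (fun y => rpow y s * fY2 p y).
Proof.
  intros H Hs. pose proof (A2_pos p H) as HA.
  destruct H as (HP1 & HP2 & Ha1 & Ha2 & Hl1 & Hl2 & HT1 & HT2). pose proof PI_RGT_0.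
  unfold fY2.
  apply (Iinf_fY_pos (2 * PI * lam2 p / A2 p) (lam2 p) s
     (fun y => lam1 p * rpow (P1 p / P2 p) (2 / al1 p) * rpow y (2 * al2 p / al1 p) + lam2 p * y ^ 2)); auto.
  - apply Rdiv_lt_0_compat; auto. apply Rmult_lt_0_compat; lra.
  - intros y. cont. apply cont_rpow; [apply Rdiv_lt_0_compat; lra|cont].
  - intros y _. pose proof (rpow_nonneg (P1 p / P2 p) (2 / al1 p)). pose proof (rpow_nonneg y (2 * al2 p / al1 p)).
    assert (0 <= lam1 p * rpow (P1 p / P2 p) (2 / al1 p) * rpow y (2 * al2 p / al1 p)).
    { apply Rmult_le_pos; auto. apply Rmult_le_pos; lra. } lra.
Qed.

Lemma cont_RInt_comp (fY lo hi : R -> R) x :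
  (forall y, continuous fY y) -> continuous lo x -> continuous hi x ->
  continuous (fun r => RInt fY (lo r) (hi r)) x.
Proof.
  intros Hf Hlo Hhi.
  apply (continuous_comp_2 lo hi (fun a b => RInt fY a b)); auto.
  apply (continuous_RInt (V:=R_NormedModule) fY (lo x) (hi x) (fun a b => RInt fY a b)).
  apply filter_forall. intros z.
  apply (RInt_correct (V:=R_CompleteNormedModule)).
  apply (ex_RInt_continuous (V:=R_CompleteNormedModule)). intros; apply Hf.
Qed.

Lemma Lint_props (fY : R -> R) (D e de ka ka' ga : R) :
  (forall y, continuous fY y) ->
  (forall y, 0 <= y -> 0 <= fY y <= D * y * exp (- e * rpow y de)) ->
  (forall y, 0 < y -> 0 < fY y) ->
  0 <= D -> 0 < e -> 0 < ga -> 0 < de -> ga * de = 2 -> 0 < ka -> ka <= ka' ->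
  0 <= Iinf (fun r => r * RInt fY (ka * rpow r ga) (ka' * rpow r ga)) /\
  (ka < ka' -> 0 < Iinf (fun r => r * RInt fY (ka * rpow r ga) (ka' * rpow r ga))).
Proof.
  intros Hc Hb Hp HD He Hga Hde Hgd Hka Hkk.
  set (rho := rpow ka de).
  assert (Hrho : 0 < rho) by (apply rpow_pos; auto).
  set (c0 := e * rho).
  assert (Hc0 : 0 < c0) by (apply Rmult_lt_0_compat; auto).
  set (K := D * ka' ^ 2 * exp ((2 * ga) ^ 2 / (2 * c0))).
  assert (HK : 0 <= K).
  { unfold K. apply Rmult_le_pos; [apply Rmult_le_pos; [auto|apply pow2_ge_0]|left; apply exp_pos]. }
  assert (Hc2 : 0 < c0 / 2) by lra.
  assert (exRI : forall a b, ex_RInt fY a b).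
  { intros a b. apply (ex_RInt_continuous (V:=R_CompleteNormedModule)). intros; apply Hc. }
  assert (Hcont : forall x, continuous (fun r => r * RInt fY (ka * rpow r ga) (ka' * rpow r ga)) x).
  { intros x. apply cont_mult; [apply cont_id|]. apply cont_RInt_comp; auto.
    - apply cont_mult; [apply cont_const|apply continuous_rpow; auto].
    - apply cont_mult; [apply cont_const|apply continuous_rpow; auto]. }
  assert (Hbd : forall r, 0 <= r ->
     0 <= r * RInt fY (ka * rpow r ga) (ka' * rpow r ga) <= K * r * exp (- (c0 / 2) * r ^ 2)).
  { intros r Hr.
    set (u := rpow r ga). assert (Hu : 0 <= u) by apply rpow_nonneg.
    set (lo := ka * u). set (hi := ka' * u).
    assert (Hlo : 0 <= lo) by (unfold lo; apply Rmult_le_pos; lra).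
    assert (Hlh : lo <= hi) by (unfold lo, hi; apply Rmult_le_compat_r; auto).
    assert (HI0 : 0 <= RInt fY lo hi).
    { apply RInt_ge_0; auto. intros y Hy; apply Hb; lra. }
    split. { apply Rmult_le_pos; auto. }
    set (M := D * hi * exp (- e * rpow lo de)).
    assert (HI1 : RInt fY lo hi <= (hi - lo) * M).
    { replace ((hi - lo) * M) with (RInt (fun _ => M) lo hi).
      2:{ rewrite RInt_const. reflexivity. }
      apply RInt_le; auto.
      apply (ex_RInt_continuous (V:=R_CompleteNormedModule)). intros; apply continuous_const.
      intros y Hy. eapply Rle_trans. apply Hb; lra. unfold M.
      apply Rmult_le_compat. apply Rmult_le_pos; lra. left; apply exp_pos.
      apply Rmult_le_compat_l; lra.
      apply exp_le_mono. assert (rpow lo de <= rpow y de) by (apply rpow_le_base; lra). nra. }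
    assert (Hrl : rpow lo de = rho * r ^ 2).
    { unfold lo, u, rho. rewrite rpow_mult by (try lra; apply rpow_nonneg). rewrite rpow_rpow by auto.
      rewrite Hgd. rewrite rpow_2 by auto. reflexivity. }
    assert (Hhi2 : hi ^ 2 = ka' ^ 2 * rpow r (2 * ga)).
    { unfold hi, u. rewrite Rpow_mult_distr. f_equal. rewrite <- rpow_2 by apply rpow_nonneg.
      rewrite rpow_rpow by auto. f_equal; ring. }
    assert (HM : (hi - lo) * M <= D * ka' ^ 2 * (rpow r (2 * ga) * exp (- c0 * r ^ 2))).
    { unfold M. rewrite Hrl.
      replace (- e * (rho * r ^ 2)) with (- c0 * r ^ 2) by (unfold c0; ring).
      replace (D * ka' ^ 2 * (rpow r (2 * ga) * exp (- c0 * r ^ 2))) with (D * hi ^ 2 * exp (- c0 * r ^ 2))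
        by (rewrite Hhi2; ring).
      pose proof (exp_pos (- c0 * r ^ 2)).
      assert (0 <= D * hi) by (apply Rmult_le_pos; lra).
      assert (0 <= D * hi * exp (- c0 * r ^ 2)) by (apply Rmult_le_pos; lra).
      replace (D * hi ^ 2 * exp (- c0 * r ^ 2)) with (hi * (D * hi * exp (- c0 * r ^ 2))) by ring.
      apply Rmult_le_compat_r; lra. }
    pose proof (pow_gauss (2 * ga) c0 r ltac:(lra) Hc0 Hr) as HG.
    assert (HDk : 0 <= D * ka' ^ 2) by (apply Rmult_le_pos; [auto|apply pow2_ge_0]).
    apply Rle_trans with (r * (D * ka' ^ 2 * (rpow r (2 * ga) * exp (- c0 * r ^ 2)))).
    { apply Rmult_le_compat_l; auto. lra. }
    replace (K * r * exp (- (c0 / 2) * r ^ 2)) with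
      (r * (D * ka' ^ 2 * (exp ((2 * ga) ^ 2 / (2 * c0)) * exp (- (c0 / 2) * r ^ 2)))) by (unfold K; ring).
    apply Rmult_le_compat_l; auto. apply Rmult_le_compat_l; auto. }
  split.
  - destruct (Iinf_ex _ K (c0 / 2) HK Hc2 (fun x _ => Hcont x) Hbd) as [_ [H0 _]]. exact H0.
  - intros Hlt. apply (Iinf_pos _ K (c0 / 2) HK Hc2 (fun x _ => Hcont x) Hbd).
    intros r Hr. apply Rmult_lt_0_compat; auto.
    pose proof (rpow_pos r ga Hr).
    apply RInt_gt_0.
    + apply Rmult_lt_compat_r; auto.
    + intros y Hy. apply Hp. assert (0 < ka * rpow r ga) by (apply Rmult_lt_0_compat; auto). lra.
    + intros; apply Hc.
Qed.

Lemma fY1_props p : Hyp p ->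
  (forall y, continuous (fY1 p) y) /\
  (forall y, 0 <= y -> 0 <= fY1 p y <= (2 * PI * lam1 p / A1 p) * y * exp (- (PI * lam1 p) * rpow y 2)) /\
  (forall y, 0 < y -> 0 < fY1 p y).
Proof.
  intros H. pose proof (A1_pos p H) as HA.
  destruct H as (HP1 & HP2 & Ha1 & Ha2 & Hl1 & Hl2 & HT1 & HT2). pose proof PI_RGT_0.
  assert (HD : 0 < 2 * PI * lam1 p / A1 p) by (apply Rdiv_lt_0_compat; auto; apply Rmult_lt_0_compat; lra).
  unfold fY1. split; [|split].
  - intros y. cont. apply cont_rpow; [apply Rdiv_lt_0_compat; lra|cont].
  - intros y Hy. rewrite rpow_2 by auto.
    pose proof (exp_pos (- PI * (lam1 p * y ^ 2 + lam2 p * rpow (P2 p / P1 p) (2 / al2 p) * rpow y (2 * al1 p / al2 p)))).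
    split. apply Rmult_le_pos; [apply Rmult_le_pos|]; lra.
    apply Rmult_le_compat_l. apply Rmult_le_pos; lra.
    apply exp_le_mono.
    pose proof (rpow_nonneg (P2 p / P1 p) (2 / al2 p)). pose proof (rpow_nonneg y (2 * al1 p / al2 p)).
    assert (0 <= lam2 p * rpow (P2 p / P1 p) (2 / al2 p) * rpow y (2 * al1 p / al2 p)).
    { apply Rmult_le_pos; auto. apply Rmult_le_pos; lra. }
    assert (0 <= PI * (lam2 p * rpow (P2 p / P1 p) (2 / al2 p) * rpow y (2 * al1 p / al2 p))) by (apply Rmult_le_pos; lra).
    lra.
  - intros y Hy. apply Rmult_lt_0_compat; [apply Rmult_lt_0_compat|apply exp_pos]; lra.
Qed.

Lemma fY2_props p : Hyp p ->
  (forall y, continuous (fY2 p) y) /\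
  (forall y, 0 <= y -> 0 <= fY2 p y <= (2 * PI * lam2 p / A2 p) * y *
     exp (- (PI * lam1 p * rpow (P1 p / P2 p) (2 / al1 p)) * rpow y (2 * al2 p / al1 p))) /\
  (forall y, 0 < y -> 0 < fY2 p y).
Proof.
  intros H. pose proof (A2_pos p H) as HA.
  destruct H as (HP1 & HP2 & Ha1 & Ha2 & Hl1 & Hl2 & HT1 & HT2). pose proof PI_RGT_0.
  assert (HD : 0 < 2 * PI * lam2 p / A2 p) by (apply Rdiv_lt_0_compat; auto; apply Rmult_lt_0_compat; lra).
  unfold fY2. split; [|split].
  - intros y. cont. apply cont_rpow; [apply Rdiv_lt_0_compat; lra|cont].
  - intros y Hy.
    pose proof (exp_pos (- PI * (lam1 p * rpow (P1 p / P2 p) (2 / al1 p) * rpow y (2 * al2 p / al1 p) + lam2 p * y ^ 2))).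
    split. apply Rmult_le_pos; [apply Rmult_le_pos|]; lra.
    apply Rmult_le_compat_l. apply Rmult_le_pos; lra.
    apply exp_le_mono.
    assert (0 <= PI * (lam2 p * y ^ 2)) by (apply Rmult_le_pos; [lra|apply Rmult_le_pos; [lra|apply pow2_ge_0]]).
    lra.
  - intros y Hy. apply Rmult_lt_0_compat; [apply Rmult_lt_0_compat|apply exp_pos]; lra.
Qed.

Lemma Lbar_pos p : Hyp p -> 1 < Rmax (T1 p) (T2 p) -> 0 < Lbar p.
Proof.
  intros H HT. pose proof (fY1_props p H) as (C1 & B1 & Q1p).
  pose proof (fY2_props p H) as (C2 & B2 & Q2p).
  pose proof (A1_pos p H). pose proof (A2_pos p H).
  destruct H as (HP1 & HP2 & Ha1 & Ha2 & Hl1 & Hl2 & HT1 & HT2). pose proof PI_RGT_0.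
  unfold Lbar, Lbar1, Lbar2, Lbar_gen.
  assert (L1 := Lint_props (fY1 p) (2 * PI * lam1 p / A1 p) (PI * lam1 p) 2
      (rpow (P1 p / (P1 p * T1 p)) (1 / al1 p)) (rpow (P1 p / P1 p) (1 / al1 p)) (al1 p / al1 p) C1 B1 Q1p).
  assert (L2 := Lint_props (fY2 p) (2 * PI * lam2 p / A2 p) (PI * lam1 p * rpow (P1 p / P2 p) (2 / al1 p))
      (2 * al2 p / al1 p)
      (rpow (P2 p / (P1 p * T2 p)) (1 / al2 p)) (rpow (P2 p / P1 p) (1 / al2 p)) (al1 p / al2 p) C2 B2 Q2p).
  assert (HD1 : 0 <= 2 * PI * lam1 p / A1 p) by (left; apply Rdiv_lt_0_compat; auto; apply Rmult_lt_0_compat; lra).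
  assert (HD2 : 0 <= 2 * PI * lam2 p / A2 p) by (left; apply Rdiv_lt_0_compat; auto; apply Rmult_lt_0_compat; lra).
  assert (HPT1 : P1 p <= P1 p * T1 p) by (rewrite <- (Rmult_1_r (P1 p)) at 1; apply Rmult_le_compat_l; lra).
  assert (HPT2 : P1 p <= P1 p * T2 p) by (rewrite <- (Rmult_1_r (P1 p)) at 1; apply Rmult_le_compat_l; lra).
  assert (Hk1 : 0 < P1 p / (P1 p * T1 p)) by (apply Rdiv_lt_0_compat; lra).
  assert (Hk2 : 0 < P2 p / (P1 p * T2 p)) by (apply Rdiv_lt_0_compat; lra).
  assert (Hle1 : P1 p / (P1 p * T1 p) <= P1 p / P1 p).
  { unfold Rdiv. apply Rmult_le_compat_l; [lra|]. apply Rinv_le_contravar; lra. }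
  assert (Hle2 : P2 p / (P1 p * T2 p) <= P2 p / P1 p).
  { unfold Rdiv. apply Rmult_le_compat_l; [lra|]. apply Rinv_le_contravar; lra. }
  assert (He1 : 0 < 1 / al1 p) by (apply Rdiv_lt_0_compat; lra).
  assert (He2 : 0 < 1 / al2 p) by (apply Rdiv_lt_0_compat; lra).
  assert (Hpil1 : 0 < PI * lam1 p) by (apply Rmult_lt_0_compat; lra).
  assert (Hrh : 0 < rpow (P1 p / P2 p) (2 / al1 p)) by (apply rpow_pos; apply Rdiv_lt_0_compat; lra).
  destruct (L1 HD1 Hpil1 ltac:(apply Rdiv_lt_0_compat; lra) ltac:(lra) ltac:(field; lra)
     ltac:(apply rpow_pos; auto) ltac:(apply rpow_le_base; lra)) as [L1a L1b].
  destruct (L2 HD2 ltac:(apply Rmult_lt_0_compat; auto) ltac:(apply Rdiv_lt_0_compat; lra)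
     ltac:(apply Rdiv_lt_0_compat; lra) ltac:(field; lra)
     ltac:(apply rpow_pos; auto) ltac:(apply rpow_le_base; lra)) as [L2a L2b].
  assert (Hc1 : 0 < 2 * PI * lam1 p) by (apply Rmult_lt_0_compat; lra).
  assert (Hc2 : 0 < 2 * PI * lam2 p) by (apply Rmult_lt_0_compat; lra).
  unfold Rmax in HT. destruct (Rle_dec (T1 p) (T2 p)).
  - assert (0 < Iinf (fun r => r * RInt (fY2 p) (rpow (P2 p / (P1 p * T2 p)) (1 / al2 p) * rpow r (al1 p / al2 p))
        (rpow (P2 p / P1 p) (1 / al2 p) * rpow r (al1 p / al2 p))))
    as HL2. { apply L2b. apply rpow_lt_base; auto. split; auto.
      unfold Rdiv. apply Rmult_lt_compat_l; [lra|]. apply Rinv_lt_contravar. apply Rmult_lt_0_compat; lra.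
      assert (P1 p * 1 < P1 p * T2 p) by (apply Rmult_lt_compat_l; lra). lra. }
    pose proof (Rmult_le_pos _ _ (Rlt_le _ _ Hc1) L1a). pose proof (Rmult_lt_0_compat _ _ Hc2 HL2). lra.
  - assert (0 < Iinf (fun r => r * RInt (fY1 p) (rpow (P1 p / (P1 p * T1 p)) (1 / al1 p) * rpow r (al1 p / al1 p))
        (rpow (P1 p / P1 p) (1 / al1 p) * rpow r (al1 p / al1 p))))
    as HL1. { apply L1b. apply rpow_lt_base; auto. split; auto.
      unfold Rdiv. apply Rmult_lt_compat_l; [lra|]. apply Rinv_lt_contravar. apply Rmult_lt_0_compat; lra.
      assert (P1 p * 1 < P1 p * T1 p) by (apply Rmult_lt_compat_l; lra). lra. }
    pose proof (Rmult_le_pos _ _ (Rlt_le _ _ Hc2) L2a). pose proof (Rmult_lt_0_compat _ _ Hc1 HL1). lra.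
Qed.


Lemma Series_nonneg (b : nat -> R) : (forall n, 0 <= b n) -> ex_series b -> 0 <= Series b.
Proof.
  intros H Hex.
  assert (E : Series (fun _ => 0) = 0).
  { rewrite (Series_ext (fun _ => 0) (fun n => 0 * b n)) by (intros; ring).
    rewrite Series_scal_l. ring. }
  rewrite <- E. apply Series_le; auto. intros n; split; [lra|auto].
Qed.

Lemma ex_series_exp (L : R) : ex_series (fun k => L ^ k / INR (fact k)).
Proof.
  exists (exp L). pose proof (is_exp_Reals L) as H. unfold is_pseries in H.
  eapply is_series_ext; [|exact H]. intros n. simpl. rewrite pow_n_pow. unfold scal; simpl.
  unfold mult; simpl. unfold Rdiv. ring.
Qed.

Lemma Series_exp (L : R) : Series (fun k => L ^ k / INR (fact k)) = exp L.
Proof.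
  apply is_series_unique. pose proof (is_exp_Reals L) as H. unfold is_pseries in H.
  eapply is_series_ext; [|exact H]. intros n. simpl. rewrite pow_n_pow. unfold scal; simpl.
  unfold mult; simpl. unfold Rdiv. ring.
Qed.

Lemma ex_series_shift (a : nat -> R) U : ex_series a -> ex_series (fun k => a (U + k)%nat).
Proof. intros H. apply (ex_series_incr_n a U). auto. Qed.

Lemma Series_filter (a : nat -> R) U :
  Series (fun k => if Nat.leb U k then a k else 0) = Series (fun k => a (U + k)%nat).
Proof.
  rewrite (Series_incr_n_aux _ U).
  - apply Series_ext. intros n. replace (Nat.leb U (U + n)) with true; auto.
    symmetry; apply Nat.leb_le; lia.
  - intros k Hk. replace (Nat.leb U k) with false; auto. symmetry; apply Nat.leb_gt; lia.
Qed.

Lemma Series_step (a : nat -> R) U : ex_series a ->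
  Series (fun k => a (U + k)%nat) = a U + Series (fun k => a (S U + k)%nat).
Proof.
  intros H. rewrite Series_incr_1 by (apply ex_series_shift; auto).
  rewrite Nat.add_0_r. f_equal. apply Series_ext. intros n. f_equal. lia.
Qed.

Lemma fsum_S n f : fsum (S n) f = fsum n f + f n.
Proof.
  unfold fsum. rewrite seq_S, fold_right_app. simpl.
  generalize (f n). induction (seq 0 n); simpl; intros; [ring|]. rewrite IHl. ring.
Qed.

Lemma fsum_0 f : fsum 0 f = 0.
Proof. reflexivity. Qed.

Definition ee (L : R) (k : nat) : R := L ^ k / INR (fact k).
Definition ss (L : R) (k : nat) : R := L ^ k / INR (fact (k + 1)).
Definition Te L U := Series (fun k => ee L (U + k)%nat).
Definition Ts L U := Series (fun k => ss L (U + k)%nat).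

Lemma INR_fact_pos k : 0 < INR (fact k).
Proof. apply lt_0_INR, lt_O_fact. Qed.

Lemma ex_ee L : ex_series (ee L).
Proof. apply ex_series_exp. Qed.

Lemma ex_ss L : ex_series (ss L).
Proof.
  apply (ex_series_le (V:=R_CompleteNormedModule) _ (fun k => Rabs L ^ k / INR (fact k))).
  - intros n. unfold norm; simpl. unfold abs; simpl. unfold ss.
    rewrite Rabs_div by (apply Rgt_not_eq, INR_fact_pos). rewrite <- RPow_abs.
    rewrite (Rabs_pos_eq (INR _)) by (left; apply INR_fact_pos).
    unfold Rdiv. apply Rmult_le_compat_l. apply pow_le, Rabs_pos.
    apply Rinv_le_contravar. apply INR_fact_pos. apply le_INR.
    rewrite Nat.add_1_r. simpl. lia.
  - apply ex_series_exp.
Qed.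

Lemma Te_step L U : Te L U = ee L U + Te L (S U).
Proof. unfold Te. apply Series_step, ex_ee. Qed.

Lemma Ts_step L U : Ts L U = ss L U + Ts L (S U).
Proof. unfold Ts. apply Series_step, ex_ss. Qed.

Lemma exp_split L U : exp L = fsum U (ee L) + Te L U.
Proof.
  induction U.
  - rewrite fsum_0. unfold Te. simpl. rewrite <- Series_exp. unfold ee. lra.
  - rewrite IHU, fsum_S, Te_step. ring.
Qed.

Lemma Ts_nonneg L U : 0 <= L -> 0 <= Ts L U.
Proof.
  intros HL. unfold Ts. apply Series_nonneg.
  - intros n. unfold ss. apply Rdiv_le_0_compat. apply pow_le; auto. apply INR_fact_pos.
  - apply ex_series_shift, ex_ss.
Qed.

Lemma Te_ge L U : 0 <= L -> INR U * Ts L U <= Te L U.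
Proof.
  intros HL. unfold Te, Ts. rewrite <- Series_scal_l. apply Series_le.
  - intros n. unfold ss, ee. split.
    + apply Rmult_le_pos. apply pos_INR. apply Rdiv_le_0_compat. apply pow_le; auto. apply INR_fact_pos.
    + rewrite Nat.add_1_r. rewrite fact_simpl, mult_INR.
      pose proof (INR_fact_pos (U + n)). pose proof (pow_le L (U + n) HL).
      assert (INR U <= INR (S (U + n))) by (apply le_INR; lia).
      assert (0 < INR (S (U + n))) by (apply lt_0_INR; lia).
      unfold Rdiv. rewrite Rinv_mult.
      replace (INR U * (L ^ (U + n) * (/ INR (S (U + n)) * / INR (fact (U + n)))))
        with ((L ^ (U + n) * / INR (fact (U + n))) * (INR U / INR (S (U + n)))) by (unfold Rdiv; ring).
      rewrite <- (Rmult_1_r (L ^ (U + n) * / INR (fact (U + n)))) at 2.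
      apply Rmult_le_compat_l. apply Rmult_le_pos; auto. left; apply Rinv_0_lt_compat; auto.
      apply Rmult_le_reg_r with (INR (S (U + n))); auto.
      unfold Rdiv. rewrite Rmult_assoc, Rinv_l by lra. lra.
  - apply ex_series_shift, ex_ee.
Qed.

Lemma pcbar_eq p U : pcbar p U = exp (- Lbar p) * (Te (Lbar p) U - INR U * Ts (Lbar p) U).
Proof.
  unfold pcbar, pc. set (L := Lbar p).
  change (fun k => L ^ k / INR (fact k)) with (ee L).
  rewrite (Series_filter (fun k => L ^ k / INR (fact (k + 1)))).
  change (Series (fun k => L ^ (U + k) / INR (fact (U + k + 1)))) with (Ts L U).
  pose proof (exp_split L U) as E.
  replace (fsum U (ee L)) with (exp L - Te L U) by lra.
  rewrite exp_Ropp. field. apply Rgt_not_eq, exp_pos.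
Qed.

Lemma pcbar_nonneg p U : 0 <= Lbar p -> 0 <= pcbar p U.
Proof.
  intros HL. rewrite pcbar_eq. apply Rmult_le_pos. left; apply exp_pos.
  pose proof (Te_ge (Lbar p) U HL). lra.
Qed.

Lemma pcbar_S p U : 0 <= Lbar p -> pcbar p (S U) <= pcbar p U.
Proof.
  intros HL. rewrite !pcbar_eq. apply Rmult_le_compat_l. left; apply exp_pos.
  set (L := Lbar p). rewrite (Te_step L U), (Ts_step L U).
  pose proof (Ts_nonneg L (S U) HL).
  assert (ee L U - INR U * ss L U >= 0).
  { unfold ee, ss. rewrite Nat.add_1_r, fact_simpl, mult_INR.
    pose proof (INR_fact_pos U). pose proof (pow_le L U HL).
    assert (0 < INR (S U)) by (apply lt_0_INR; lia).
    rewrite S_INR in *.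
    replace (L ^ U / INR (fact U) - INR U * (L ^ U / ((INR U + 1) * INR (fact U))))
      with (L ^ U / ((INR U + 1) * INR (fact U))) by (field; lra).
    apply Rle_ge, Rdiv_le_0_compat; auto. apply Rmult_lt_0_compat; lra. }
  rewrite S_INR. lra.
Qed.

Lemma pcbar_anti p U V : 0 <= Lbar p -> (U <= V)%nat -> pcbar p V <= pcbar p U.
Proof.
  intros HL HUV. induction HUV; [lra|]. pose proof (pcbar_S p m HL). lra.
Qed.

Lemma Q1_pos p U : 0 < Lbar p -> 0 < Q1 p U.
Proof.
  intros HL. unfold Q1. set (L := Lbar p). assert (HL' : 0 < L) by exact HL.
  rewrite (Series_ext _ (fun k => if Nat.leb U k then exp (- L) * ee L k else 0)).
  2:{ intros n. replace (Nat.eqb (Nat.min U n) U) with (Nat.leb U n).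
      - destruct (Nat.leb U n); auto. unfold poisson_pmf, ee. fold L. field.
        apply Rgt_not_eq, INR_fact_pos.
      - destruct (Nat.leb U n) eqn:E; symmetry.
        + apply Nat.eqb_eq. apply Nat.leb_le in E. lia.
        + apply Nat.eqb_neq. apply Nat.leb_gt in E. lia. }
  rewrite Series_filter.
  assert (Hex : ex_series (fun k => exp (- L) * ee L k)).
  { apply (ex_series_scal_l (V:=R_NormedModule)). apply ex_ee. }
  rewrite (Series_step (fun k => exp (- L) * ee L k) U Hex).
  assert (0 <= Series (fun k => exp (- L) * ee L (S U + k))).
  { apply Series_nonneg.
    - intros n. apply Rmult_le_pos. left; apply exp_pos.
      unfold ee. apply Rdiv_le_0_compat. apply pow_le. lra. apply INR_fact_pos.
    - apply (ex_series_shift (fun k => exp (- L) * ee L k)); auto. }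
  assert (0 < exp (- L) * ee L U).
  { apply Rmult_lt_0_compat. apply exp_pos. unfold ee. apply Rdiv_lt_0_compat.
    apply pow_lt; auto. apply INR_fact_pos. }
  lra.
Qed.


Lemma lsum_le {A} (l : list A) f g : (forall x, In x l -> f x <= g x) -> lsum l f <= lsum l g.
Proof.
  induction l as [|x l IH]; simpl; intros H; [lra|].
  apply Rplus_le_compat; auto.
Qed.

Lemma lsum_nonneg {A} (l : list A) f : (forall x, In x l -> 0 <= f x) -> 0 <= lsum l f.
Proof.
  induction l as [|x l IH]; simpl; intros H; [lra|].
  apply Rplus_le_le_0_compat; auto.
Qed.

Lemma lsum_pos {A} (l : list A) f : (forall x, In x l -> 0 <= f x) -> (exists x, In x l /\ 0 < f x) ->
  0 < lsum l f.
Proof.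
  induction l as [|x l IH]; simpl; intros H [y [Hy Hpos]]; [contradiction|].
  destruct Hy as [<-|Hy].
  - pose proof (lsum_nonneg l f (fun z Hz => H z (or_intror Hz))). lra.
  - pose proof (H x (or_introl eq_refl)).
    assert (0 < lsum l f) by (apply IH; eauto). lra.
Qed.

Lemma pprod_nonneg a0 c m : (forall a, (a0 <= a)%nat -> 0 <= c a) -> 0 <= pprod_from a0 c m.
Proof.
  revert a0. induction m as [|x m IH]; simpl; intros a0 H; [lra|].
  apply Rmult_le_pos; [apply Rmult_le_pos|].
  - left; apply Rinv_0_lt_compat, INR_fact_pos.
  - apply pow_le, H; lia.
  - apply IH. intros a Ha; apply H; lia.
Qed.

Lemma pprod_pos a0 c m : (forall a, (a0 <= a)%nat -> 0 < c a) -> 0 < pprod_from a0 c m.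
Proof.
  revert a0. induction m as [|x m IH]; simpl; intros a0 H; [lra|].
  apply Rmult_lt_0_compat; [apply Rmult_lt_0_compat|].
  - apply Rinv_0_lt_compat, INR_fact_pos.
  - apply pow_lt, H; lia.
  - apply IH. intros a Ha; apply H; lia.
Qed.

Lemma pprod_mono a0 c c' m : (forall a, (a0 <= a)%nat -> 0 <= c a <= c' a) ->
  pprod_from a0 c m <= pprod_from a0 c' m.
Proof.
  revert a0. induction m as [|x m IH]; simpl; intros a0 H; [lra|].
  assert (0 <= / INR (fact x)) by (left; apply Rinv_0_lt_compat, INR_fact_pos).
  apply Rmult_le_compat.
  - apply Rmult_le_pos; auto. apply pow_le, H; lia.
  - apply pprod_nonneg. intros a Ha; apply H; lia.
  - apply Rmult_le_compat_l; auto. apply pow_incr. apply H; lia.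
  - apply IH. intros a Ha; apply H; lia.
Qed.

Lemma lists_bounded_In n k l : length l = n -> (forall x, In x l -> (x <= k)%nat) -> In l (lists_bounded n k).
Proof.
  revert l. induction n as [|n IH]; intros l Hl Hx.
  - simpl. destruct l; [left; auto|discriminate].
  - destruct l as [|x l]; [discriminate|]. change (lists_bounded (S n) k) with
      (flat_map (fun x => map (cons x) (lists_bounded n k)) (seq 0 (S k))). apply in_flat_map. exists x. split.
    + apply in_seq. assert (x <= k)%nat by (apply Hx; left; auto). lia.
    + apply in_map. apply IH. simpl in Hl; lia. intros y Hy; apply Hx; right; auto.
Qed.

Lemma wsum_repeat0 a k : wsum_from a (repeat 0%nat k) = 0%nat.
Proof. revert a. induction k; simpl; intros; auto. rewrite IHk. lia. Qed.

Lemma Mset_nonempty n : exists m, In m (Mset n).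
Proof.
  destruct n as [|k].
  - exists []. simpl. left; auto.
  - exists (S k :: repeat 0%nat k). unfold Mset. apply filter_In. split.
    + apply lists_bounded_In. simpl. rewrite repeat_length. auto.
      intros x [<-|Hx]; [lia|]. apply repeat_spec in Hx. lia.
    + simpl. rewrite wsum_repeat0. apply Nat.eqb_eq. lia.
Qed.

Lemma Nset_In n : In (0%nat, 0%nat, n) (Nset n).
Proof.
  unfold Nset. apply in_flat_map. exists 0%nat. split.
  - apply in_seq. lia.
  - apply in_map_iff. exists 0%nat. split.
    + f_equal. lia.
    + apply in_seq. lia.
Qed.

Lemma INR_ge1 a : (1 <= a)%nat -> 1 <= INR a.
Proof. intros H. replace 1 with (INR 1) by reflexivity. apply le_INR; auto. Qed.

Lemma coefA_pos lam al P a : 0 < lam -> 2 < al -> (1 <= a)%nat ->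
  0 < 2 * PI * lam / (al * (INR a - 2 / al)) * P -> True.
Proof. auto. Qed.

Lemma fracpos lam al a : 0 < lam -> 2 < al -> (1 <= a)%nat -> 0 < 2 * PI * lam / (al * (INR a - 2 / al)).
Proof.
  intros Hl Ha Hn. pose proof (INR_ge1 a Hn). pose proof PI_RGT_0.
  assert (2 / al < 1) by (apply Rmult_lt_reg_r with al; [lra|]; unfold Rdiv; rewrite Rmult_assoc, Rinv_l; lra).
  apply Rdiv_lt_0_compat. apply Rmult_lt_0_compat; [lra|auto]. apply Rmult_lt_0_compat; lra.
Qed.

Lemma b_gen_mono p Pj aj Tj fY Nj Uj Qj U U' :
  Hyp p -> 0 < aj -> 1 <= Tj -> 0 <= Qj -> 0 <= pcbar p U' -> pcbar p U' <= pcbar p U ->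
  (forall s, 0 <= s -> 0 <= Iinf (fun y => rpow y s * fY y)) ->
  b_gen p Pj aj Tj fY Nj Uj Qj U' <= b_gen p Pj aj Tj fY Nj Uj Qj U.
Proof.
  intros H Haj HTj HQ Hpc Hpc' HI.
  destruct H as (HP1 & HP2 & Ha1 & Ha2 & Hl1 & Hl2 & HT1 & HT2).
  unfold b_gen. apply Rmult_le_compat_l; auto.
  apply lsum_le; intros [[n1 n2] n3] _.
  apply lsum_le; intros m _; apply lsum_le; intros pp _; apply lsum_le; intros q _.
  set (Iv := Iinf _).
  assert (HIv : 0 <= Iv).
  { apply HI. apply Rplus_le_le_0_compat; apply Rmult_le_pos; try apply pos_INR;
    apply Rdiv_le_0_compat; lra. }
  set (A2' := pprod_from 1 _ pp). set (A3 := pprod_from 1 _ q).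
  assert (0 <= A2').
  { apply pprod_nonneg. intros a Ha. apply Rmult_le_pos.
    apply Rmult_le_pos. left; apply fracpos; auto. apply rpow_nonneg. apply rpow_nonneg. }
  assert (0 <= A3).
  { apply pprod_nonneg. intros a Ha. apply Rmult_le_pos.
    left; apply fracpos; auto. apply rpow_nonneg. }
  apply Rmult_le_compat_r; auto. apply Rmult_le_compat_r; auto. apply Rmult_le_compat_l; auto.
  apply pprod_mono. intros a Ha.
  pose proof (fracpos (lam1 p) (al1 p) a Hl1 Ha1 Ha).
  pose proof (rpow_nonneg (P1 p / Pj) (2 / al1 p)).
  assert (0 <= 1 - rpow Tj (- (INR a - 2 / al1 p))).
  { pose proof (INR_ge1 a Ha).
    assert (2 / al1 p < 1) by (apply Rmult_lt_reg_r with (al1 p); [lra|]; unfold Rdiv; rewrite Rmult_assoc, Rinv_l; lra).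
    pose proof (rpow_le1 Tj (- (INR a - 2 / al1 p)) HTj ltac:(lra)). lra. }
  split.
  - apply Rmult_le_pos; auto. apply Rmult_le_pos; auto. apply Rmult_le_pos; lra.
  - apply Rmult_le_compat_r; auto. apply Rmult_le_compat_l; auto. apply Rmult_le_pos; lra.
Qed.

Lemma Mset0 : Mset 0 = [[]].
Proof. reflexivity. Qed.

Lemma lsum_single {A} (x : A) f : lsum [x] f = f x.
Proof. simpl. ring. Qed.

Lemma b_gen_pos p Pj aj Tj fY Nj Uj Qj U :
  Hyp p -> 0 < Pj -> 0 < aj -> 1 <= Tj -> 0 < Qj -> 0 <= pcbar p U ->
  (forall s, 0 <= s -> 0 < Iinf (fun y => rpow y s * fY y)) ->
  0 < b_gen p Pj aj Tj fY Nj Uj Qj U.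
Proof.
  intros H HPj Haj HTj HQ Hpc HI.
  destruct H as (HP1 & HP2 & Ha1 & Ha2 & Hl1 & Hl2 & HT1 & HT2).
  unfold b_gen. apply Rmult_lt_0_compat; auto.
  set (c1 := fun a : nat => _). set (c2 := fun a : nat => _). set (c3 := fun a : nat => _).
  assert (Hc1 : forall a, (1 <= a)%nat -> 0 <= c1 a).
  { intros a Ha. unfold c1.
    pose proof (fracpos (lam1 p) (al1 p) a Hl1 Ha1 Ha).
    pose proof (rpow_nonneg (P1 p / Pj) (2 / al1 p)).
    assert (0 <= 1 - rpow Tj (- (INR a - 2 / al1 p))).
    { pose proof (INR_ge1 a Ha).
      assert (2 / al1 p < 1) by (apply Rmult_lt_reg_r with (al1 p); [lra|]; unfold Rdiv; rewrite Rmult_assoc, Rinv_l; lra).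
      pose proof (rpow_le1 Tj (- (INR a - 2 / al1 p)) HTj ltac:(lra)). lra. }
    apply Rmult_le_pos; auto. apply Rmult_le_pos; auto. apply Rmult_le_pos; lra. }
  assert (Hc2 : forall a, (1 <= a)%nat -> 0 < c2 a).
  { intros a Ha. unfold c2. apply Rmult_lt_0_compat. apply Rmult_lt_0_compat.
    apply fracpos; auto. apply rpow_pos; apply Rdiv_lt_0_compat; lra. apply rpow_pos; lra. }
  assert (Hc3 : forall a, (1 <= a)%nat -> 0 < c3 a).
  { intros a Ha. unfold c3. apply Rmult_lt_0_compat.
    apply fracpos; auto. apply rpow_pos; apply Rdiv_lt_0_compat; lra. }
  assert (Hs : forall m pp q, 0 <= 2 * aj / al1 p * INR (sumn m + sumn pp) + 2 * aj / al2 p * INR (sumn q)).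
  { intros. apply Rplus_le_le_0_compat; apply Rmult_le_pos; try apply pos_INR;
    apply Rdiv_le_0_compat; lra. }
  assert (Hterm : forall m pp q,
    0 < Iinf (fun y => rpow y (2 * aj / al1 p * INR (sumn m + sumn pp) + 2 * aj / al2 p * INR (sumn q)) * fY y)
        * pprod_from 1 c1 m * pprod_from 1 c2 pp * pprod_from 1 c3 q \/
    (0 <= Iinf (fun y => rpow y (2 * aj / al1 p * INR (sumn m + sumn pp) + 2 * aj / al2 p * INR (sumn q)) * fY y)
        * pprod_from 1 c1 m * pprod_from 1 c2 pp * pprod_from 1 c3 q /\ m <> [])).
  { intros m pp q.
    pose proof (HI _ (Hs m pp q)).
    pose proof (pprod_nonneg 1 c1 m Hc1). pose proof (pprod_pos 1 c2 pp Hc2). pose proof (pprod_pos 1 c3 q Hc3).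
    destruct m as [|x m].
    - left. change (pprod_from 1 c1 []) with 1. apply Rmult_lt_0_compat; [apply Rmult_lt_0_compat; [apply Rmult_lt_0_compat; [auto|lra]|auto]|auto].
    - right. split; [|discriminate].
      apply Rmult_le_pos; [|lra]. apply Rmult_le_pos; [|lra]. apply Rmult_le_pos; lra. }
  assert (Hnn : forall m pp q,
    0 <= Iinf (fun y => rpow y (2 * aj / al1 p * INR (sumn m + sumn pp) + 2 * aj / al2 p * INR (sumn q)) * fY y)
        * pprod_from 1 c1 m * pprod_from 1 c2 pp * pprod_from 1 c3 q).
  { intros m pp q. destruct (Hterm m pp q) as [H|[H _]]; lra. }
  apply lsum_pos.
  - intros [[n1 n2] n3] _.
    apply lsum_nonneg; intros m _; apply lsum_nonneg; intros pp _; apply lsum_nonneg; intros q _. apply Hnn.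
  - exists (0%nat, 0%nat, (Nj - Uj)%nat). split; [apply Nset_In|].
    cbv beta iota. rewrite Mset0. rewrite lsum_single. cbv beta. rewrite lsum_single. cbv beta.
    apply lsum_pos.
    + intros q _. apply Hnn.
    + destruct (Mset_nonempty (Nj - Uj)) as [q Hq]. exists q. split; auto.
      destruct (Hterm [] [] q) as [H|[_ H]]; [exact H|congruence].
Qed.


Lemma finite_min (f : nat -> R) (P : nat -> Prop) n :
  (forall U, (U <= n)%nat -> P U -> 0 < f U) ->
  exists m, 0 < m /\ forall U, (U <= n)%nat -> P U -> m <= f U.
Proof.
  induction n as [|n IH]; intros H.
  - destruct (classic (P 0%nat)) as [HP|HP].
    + exists (f 0%nat). split; [apply H; auto|]. intros U HU HPU.
      replace U with 0%nat by lia. lra.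
    + exists 1. split; [lra|]. intros U HU HPU. replace U with 0%nat in HPU by lia. contradiction.
  - destruct IH as [m [Hm Hm']]. { intros U HU; apply H; lia. }
    destruct (classic (P (S n))) as [HP|HP].
    + exists (Rmin m (f (S n))). split.
      * apply Rmin_pos; [auto| apply H; auto].
      * intros U HU HPU. destruct (Nat.eq_dec U (S n)) as [->|Hne].
        -- apply Rmin_r.
        -- eapply Rle_trans; [apply Rmin_l|]. apply Hm'; auto. lia.
    + exists m. split; auto. intros U HU HPU. destruct (Nat.eq_dec U (S n)) as [->|Hne].
      * contradiction.
      * apply Hm'; auto. lia.
Qed.

Lemma pow_le_one' (x : R) j : 0 <= x <= 1 -> x ^ j <= 1.
Proof.
  intros Hx. induction j; simpl; [lra|].
  pose proof (pow_le x j (proj1 Hx)).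
  apply Rle_trans with (1 * x ^ j); [apply Rmult_le_compat_r; lra| lra].
Qed.

Lemma pow_le_base (x : R) j : 0 <= x <= 1 -> (1 <= j)%nat -> x ^ j <= x.
Proof.
  intros Hx Hj. destruct j as [|j]; [lia|]. simpl.
  pose proof (pow_le_one' x j Hx).
  apply Rle_trans with (x * 1); [apply Rmult_le_compat_l; lra | lra].
Qed.

Lemma b2_mono p U V : Hyp p -> 1 < Rmax (T1 p) (T2 p) -> (U <= V)%nat -> b2 p V <= b2 p U.
Proof.
  intros H HT HUV. pose proof (Lbar_pos p H HT) as HL.
  pose proof H as (HP1 & HP2 & Ha1 & Ha2 & Hl1 & Hl2 & HT1 & HT2).
  unfold b2. apply b_gen_mono; auto; try lra.
  - apply pcbar_nonneg; lra.
  - apply pcbar_anti; auto; lra.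
  - intros s Hs. left. apply fY2_int_pos; auto.
Qed.

Lemma b1_pos p U : Hyp p -> 1 < Rmax (T1 p) (T2 p) -> 0 < b1 p U.
Proof.
  intros H HT. pose proof (Lbar_pos p H HT) as HL.
  pose proof H as (HP1 & HP2 & Ha1 & Ha2 & Hl1 & Hl2 & HT1 & HT2).
  unfold b1. apply b_gen_pos; auto; try lra.
  - apply Q1_pos; auto.
  - apply pcbar_nonneg; lra.
  - intros s Hs. apply fY1_int_pos; auto.
Qed.

Theorem lemma4 (p : params) :
  (1 <= N2 p)%nat -> (N2 p < N1 p)%nat ->
  0 < P1 p -> 0 < P2 p -> 2 < al1 p -> 2 < al2 p ->
  0 < lam1 p -> 0 < lam2 p -> 1 <= T1 p -> 1 <= T2 p ->
  1 < Rmax (T1 p) (T2 p) ->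
  exists bbar : R, 0 < bbar /\
    forall beta : R, 0 < beta < bbar ->
      (Ustar p < N1 p)%nat /\
      forall U : nat, (U <= N1 p - 1)%nat -> F p (Ustar p) beta <= F p U beta.
Proof.
  intros HN2 HN12 HP1 HP2 Ha1 Ha2 Hl1 Hl2 HT1 HT2 HT.
  assert (H : Hyp p) by (repeat split; auto).
  pose proof (A1_pos p H) as HA1. pose proof (A2_pos p H) as HA2.
  set (d := (N1 p - N2 p)%nat).
  assert (Hd : (1 <= d)%nat) by (unfold d; lia).
  destruct (finite_min (b p) (fun U => (d < U)%nat) (N1 p - 1)) as [m [Hm Hm']].
  { intros U HU HdU. unfold b.
    replace (Nat.ltb U (N1 p - N2 p)) with false by (symmetry; apply Nat.ltb_ge; unfold d in HdU; lia).
    replace (Nat.eqb U (N1 p - N2 p)) with false by (symmetry; apply Nat.eqb_neq; unfold d in HdU; lia).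
    apply Rmult_lt_0_compat; auto. apply b1_pos; auto. }
  set (B := b p (Ustar p)).
  assert (HUs : (Ustar p = d - 1 \/ Ustar p = d)%nat).
  { unfold Ustar. destruct (Rlt_dec _ _); [left|right]; unfold d; lia. }
  exists (Rmin 1 (m / (Rabs B + 1))). split.
  { apply Rmin_pos; [lra|]. apply Rdiv_lt_0_compat; auto. pose proof (Rabs_pos B); lra. }
  intros beta [Hb0 Hb1].
  assert (Hb1' : beta < 1) by (eapply Rlt_le_trans; [exact Hb1|apply Rmin_l]).
  assert (Hb2 : beta < m / (Rabs B + 1)) by (eapply Rlt_le_trans; [exact Hb1|apply Rmin_r]).
  split. { destruct HUs as [-> | ->]; unfold d; lia. }
  intros U HU.
  unfold F. fold B.
  assert (HminS : Nat.min (N1 p - Ustar p) (N2 p) = N2 p).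
  { apply Nat.min_r. destruct HUs as [-> | ->]; unfold d; lia. }
  rewrite HminS.
  destruct (le_lt_dec U d) as [HUd|HUd].
  -
    assert (HminU : Nat.min (N1 p - U) (N2 p) = N2 p) by (apply Nat.min_r; unfold d in HUd; lia).
    rewrite HminU. apply Rmult_le_compat_r; [apply pow_le; lra|].
    assert (Hbd1 : b p (d - 1) = A2 p * b2 p (d - 1)).
    { unfold b. replace (Nat.ltb (d - 1) (N1 p - N2 p)) with true; auto.
      symmetry; apply Nat.ltb_lt; unfold d in *; lia. }
    assert (Hbd : b p d = A1 p * b1 p d + A2 p * b2 p d).
    { unfold b. replace (Nat.ltb d (N1 p - N2 p)) with false by (symmetry; apply Nat.ltb_ge; unfold d; lia).
      replace (Nat.eqb d (N1 p - N2 p)) with true; auto. symmetry; apply Nat.eqb_eq; unfold d; lia. }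
    assert (HUs' : Ustar p = (if Rlt_dec (A2 p * b2 p (d - 1)) (A1 p * b1 p d + A2 p * b2 p d)
                             then (d - 1)%nat else d)) by reflexivity.
    unfold B. rewrite HUs'.
    destruct (Nat.eq_dec U d) as [->|Hne].
    + destruct (Rlt_dec _ _) as [Hlt|Hnlt].
      * rewrite Hbd1, Hbd. lra.
      * lra.
    + assert (HbU : b p U = A2 p * b2 p U).
      { unfold b. replace (Nat.ltb U (N1 p - N2 p)) with true; auto.
        symmetry; apply Nat.ltb_lt; unfold d in *; lia. }
      assert (Hmono : A2 p * b2 p (d - 1) <= A2 p * b2 p U).
      { apply Rmult_le_compat_l; [lra|]. apply b2_mono; auto. lia. }
      rewrite HbU. destruct (Rlt_dec _ _) as [Hlt|Hnlt].
      * rewrite Hbd1. lra.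
      * rewrite Hbd. lra.
  - set (k := Nat.min (N1 p - U) (N2 p)).
    assert (Hk : k = (N1 p - U)%nat) by (unfold k; apply Nat.min_l; unfold d in HUd; lia).
    assert (Hk2 : (1 <= N2 p - k)%nat) by (rewrite Hk; unfold d in HUd; lia).
    replace (N2 p) with ((N2 p - k) + k)%nat by (rewrite Hk; unfold d in HUd; lia).
    rewrite pow_add.
    assert (HmU : m <= b p U) by (apply Hm'; auto).
    pose proof (pow_le beta k ltac:(lra)) as Hbk.
    rewrite <- Rmult_assoc. apply Rmult_le_compat_r; auto.
    pose proof (pow_le_base beta (N2 p - k) ltac:(lra) Hk2) as Hpb.
    pose proof (pow_le beta (N2 p - k) ltac:(lra)) as Hpb0.
    destruct (Rle_dec B 0) as [HB|HB].
    + assert (B * beta ^ (N2 p - k) <= 0) by (apply Rmult_le_0_r; auto).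
      lra.
    + assert (B * beta ^ (N2 p - k) <= B * beta) by (apply Rmult_le_compat_l; lra).
      assert (B * beta <= m).
      { rewrite Rabs_pos_eq in Hb2 by lra.
        apply Rmult_lt_compat_l with (r := B + 1) in Hb2; [|lra].
        replace ((B + 1) * (m / (B + 1))) with m in Hb2 by (field; lra).
        nra. }
      lra.
Qed.
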